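(* Let $A\in\mathbb{C}^{n\times m}$, $\alpha_1\ge1/\sqrt{n}$, $\alpha_2\ge1/\sqrt{m}$, $B\in\mathbb{C}^{l\times n}$, $b\in\mathbb{R}^l$, $D\in\mathbb{C}^{q\times m}$, $d\in\mathbb{R}^q$, and let $$S_1=\{u\in\mathbb{C}^n:\|u\|\le\alpha_1,\ \operatorname{Re}(u)\ge0,\ \mathbf 1_n^Tu=1,\ \operatorname{Re}(Bu)\le b\},\quad S_2=\{v\in\mathbb{C}^m:\|v\|\le\alpha_2,\ \operatorname{Re}(v)\ge0,\ \mathbf 1_m^Tv=1,\ \operatorname{Re}(Dv)\ge d\}.$$ Assume there exist $u\in S_1$, $v\in S_2$ for which all defining inequality constraints of $S_1$ and $S_2$ hold strictly. Call $(u^\star,v^\star)\in S_1\times S_2$ a saddle-point equilibrium if $u^\star$ maximizes $\operatorname{Re}(u^HAv^\star)$ over $u\in S_1$ and $v^\star$ minimizes $\operatorname{Re}(u^{\star H}Av)$ over $v\in S_2$. Consider the problems $$\text{(P)}\quad \min_{v,\lambda_1,\beta_1,\rho_1,r_1}\ \lambda_1^Tb+\alpha_1\|\beta_1\|+\operatorname{Re}(\rho_1)\quad\text{s.t.}\quad Av-B^H\lambda_1-\beta_1+r_1-\bar\rho_1\mathbf 1_n=0,\ \operatorname{Re}(Dv)\ge d,\ \|v\|\le\alpha_2,\ \mathbf 1_m^Tv=1,\ \operatorname{Re}(v)\ge0,\ r_1\ge0,\ \lambda_1\ge0,$$ over $v\in\mathbb{C}^m$, $\lambda_1\in\mathbb{R}^l$,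 $\beta_1\in\mathbb{C}^n$, $\rho_1\in\mathbb{C}$, $r_1\in\mathbb{R}^n$, and $$\text{(D)}\quad \max_{u,\lambda_2,\beta_2,\rho_2,r_2}\ \lambda_2^Td-\alpha_2\|\beta_2\|-\operatorname{Re}(\rho_2)\quad\text{s.t.}\quad A^Hu-D^H\lambda_2+\beta_2-r_2+\bar\rho_2\mathbf 1_m=0,\ \operatorname{Re}(Bu)\le b,\ \|u\|\le\alpha_1,\ \mathbf 1_n^Tu=1,\ \operatorname{Re}(u)\ge0,\ r_2\ge0,\ \lambda_2\ge0,$$ over $u\in\mathbb{C}^n$, $\lambda_2\in\mathbb{R}^q$, $\beta_2\in\mathbb{C}^m$, $\rho_2\in\mathbb{C}$, $r_2\in\mathbb{R}^m$. Then $(u^\star,v^\star)$ is a saddle-point equilibrium if and only if there exist $(\rho_1^\star,r_1^\star,\lambda_1^\star,\beta_1^\star)$ and $(\rho_2^\star,r_2^\star,\lambda_2^\star,\beta_2^\star)$ such that $(v^\star,\lambda_1^\star,\beta_1^\star,\rho_1^\star,r_1^\star)$ is optimal for (P) and $(u^\star,\lambda_2^\star,\beta_2^\star,\rho_2^\star,r_2^\star)$ is optimal for (D).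
   Context: $\|\cdot\|$ is the Euclidean norm, $^H$ is conjugate transpose, $\bar\rho$ is complex conjugation, $\mathbf 1_k$ is the all-ones vector in $\mathbb{R}^k$, and inequalities between real vectors are componentwise. *)

(* Defs.v *)
From HB Require Import structures.
From mathcomp Require Import all_boot all_order all_algebra.
From mathcomp Require Import complex.
From mathcomp Require Import reals.
Set Implicit Arguments. Unset Strict Implicit. Unset Printing Implicit Defensive.
Import Order.TTheory GRing.Theory Num.Theory.
Local Open Scope ring_scope.

Section Defs.
Variable R : realType.
Local Notation C := (R[i]).

Definition cconj (z : C) : C := conjc z.

Definition cvC k (x : 'cV[R]_k) : 'cV[C]_k := map_mx (fun a : R => (a%:C)%C) x.

Definition adjmx k p (M : 'M[C]_(k, p)) : 'M[C]_(p, k) := map_mx cconj M^T.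

Definition cvnorm k (x : 'cV[C]_k) : R :=
  Num.sqrt (\sum_i ((@complex.Re R (x i 0)) ^+ 2 + (@complex.Im R (x i 0)) ^+ 2)).

Definition reV k (x : 'cV[C]_k) : 'cV[R]_k := map_mx (@complex.Re R) x.

Definition vle k (x y : 'cV[R]_k) : Prop := forall i, x i 0 <= y i 0.
Definition vlt k (x y : 'cV[R]_k) : Prop := forall i, x i 0 < y i 0.

Definition sumv k (x : 'cV[C]_k) : C := \sum_i x i 0.

Definition bil n m (u : 'cV[C]_n) (A : 'M[C]_(n, m)) (v : 'cV[C]_m) : R :=
  @complex.Re R ((adjmx u *m A *m v) 0 0).

Definition rdot k (x y : 'cV[R]_k) : R := \sum_i x i 0 * y i 0.

Definition S1 n l (alpha1 : R) (B : 'M[C]_(l, n)) (b : 'cV[R]_l)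
  (u : 'cV[C]_n) : Prop :=
  [/\ cvnorm u <= alpha1, vle 0 (reV u), sumv u = 1 & vle (reV (B *m u)) b].

Definition S2 m q (alpha2 : R) (D : 'M[C]_(q, m)) (d : 'cV[R]_q)
  (v : 'cV[C]_m) : Prop :=
  [/\ cvnorm v <= alpha2, vle 0 (reV v), sumv v = 1 & vle d (reV (D *m v))].

Definition S1strict n l (alpha1 : R) (B : 'M[C]_(l, n)) (b : 'cV[R]_l)
  (u : 'cV[C]_n) : Prop :=
  [/\ cvnorm u < alpha1, vlt 0 (reV u), sumv u = 1 & vlt (reV (B *m u)) b].

Definition S2strict m q (alpha2 : R) (D : 'M[C]_(q, m)) (d : 'cV[R]_q)
  (v : 'cV[C]_m) : Prop :=
  [/\ cvnorm v < alpha2, vlt 0 (reV v), sumv v = 1 & vlt d (reV (D *m v))].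

Definition saddle n m l q (A : 'M[C]_(n, m)) alpha1 alpha2
  (B : 'M[C]_(l, n)) (b : 'cV[R]_l) (D : 'M[C]_(q, m)) (d : 'cV[R]_q)
  (us : 'cV[C]_n) (vs : 'cV[C]_m) : Prop :=
  [/\ S1 alpha1 B b us, S2 alpha2 D d vs,
      (forall u, S1 alpha1 B b u -> bil u A vs <= bil us A vs) &
      (forall v, S2 alpha2 D d v -> bil us A vs <= bil us A v)].

Definition feasP n m l q (A : 'M[C]_(n, m)) (alpha2 : R)
  (B : 'M[C]_(l, n)) (D : 'M[C]_(q, m)) (d : 'cV[R]_q)
  (v : 'cV[C]_m) (lam1 : 'cV[R]_l) (beta1 : 'cV[C]_n) (rho1 : C)
  (r1 : 'cV[R]_n) : Prop :=
  [/\ A *m v - adjmx B *m cvC lam1 - beta1 + cvC r1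
        - cconj rho1 *: const_mx 1 = 0,
      vle d (reV (D *m v)), cvnorm v <= alpha2, sumv v = 1 &
      [/\ vle 0 (reV v), vle 0 r1 & vle 0 lam1]].

Definition objP n l (alpha1 : R) (b : 'cV[R]_l)
  (lam1 : 'cV[R]_l) (beta1 : 'cV[C]_n) (rho1 : C) : R :=
  rdot lam1 b + alpha1 * cvnorm beta1 + @complex.Re R rho1.

Definition optP n m l q (A : 'M[C]_(n, m)) (alpha1 alpha2 : R)
  (B : 'M[C]_(l, n)) (b : 'cV[R]_l) (D : 'M[C]_(q, m)) (d : 'cV[R]_q)
  v lam1 beta1 rho1 r1 : Prop :=
  feasP A alpha2 B D d v lam1 beta1 rho1 r1 /\
  forall v' lam1' beta1' rho1' r1',
    feasP A alpha2 B D d v' lam1' beta1' rho1' r1' ->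
    objP alpha1 b lam1 beta1 rho1 <= objP alpha1 b lam1' beta1' rho1'.

Definition feasD n m l q (A : 'M[C]_(n, m)) (alpha1 : R)
  (B : 'M[C]_(l, n)) (b : 'cV[R]_l) (D : 'M[C]_(q, m))
  (u : 'cV[C]_n) (lam2 : 'cV[R]_q) (beta2 : 'cV[C]_m) (rho2 : C)
  (r2 : 'cV[R]_m) : Prop :=
  [/\ adjmx A *m u - adjmx D *m cvC lam2 + beta2 - cvC r2
        + cconj rho2 *: const_mx 1 = 0,
      vle (reV (B *m u)) b, cvnorm u <= alpha1, sumv u = 1 &
      [/\ vle 0 (reV u), vle 0 r2 & vle 0 lam2]].

Definition objD m q (alpha2 : R) (d : 'cV[R]_q)
  (lam2 : 'cV[R]_q) (beta2 : 'cV[C]_m) (rho2 : C) : R :=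
  rdot lam2 d - alpha2 * cvnorm beta2 - @complex.Re R rho2.

Definition optD n m l q (A : 'M[C]_(n, m)) (alpha1 alpha2 : R)
  (B : 'M[C]_(l, n)) (b : 'cV[R]_l) (D : 'M[C]_(q, m)) (d : 'cV[R]_q)
  u lam2 beta2 rho2 r2 : Prop :=
  feasD A alpha1 B b D u lam2 beta2 rho2 r2 /\
  forall u' lam2' beta2' rho2' r2',
    feasD A alpha1 B b D u' lam2' beta2' rho2' r2' ->
    objD alpha2 d lam2' beta2' rho2' <= objD alpha2 d lam2 beta2 rho2.

End Defs.

(* Main.v *)
Require Import Defs.
From HB Require Import structures.
From mathcomp Require Import all_boot all_order all_algebra.
From mathcomp Require Import complex.
From mathcomp Require Import reals.
From mathcomp Require Import boolp classical_sets.
From mathcomp Require Import ring lra.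
Set Implicit Arguments. Unset Strict Implicit. Unset Printing Implicit Defensive.
Import Order.TTheory GRing.Theory Num.Theory.
Local Open Scope ring_scope.


Section GL.
Local Open Scope classical_set_scope.
Variables (R : realType) (I : finType).
Definition dotf (c x : I -> R) : R := \sum_i c i * x i.

Variables (p : (I -> R) -> R) (G : (I -> R) -> Prop).
Hypothesis padd : forall x y, p (fun i => x i + y i) <= p x + p y.
Hypothesis phom : forall t x, 0 < t -> p (fun i => t * x i) = t * p x.
Hypothesis p0 : p (fun _ => 0) <= 0.
Hypothesis G0 : G (fun _ => 0).
Hypothesis Gadd : forall x y, G x -> G y -> G (fun i => x i + y i).
Hypothesis Gscale : forall t x, 0 < t -> G x -> G (fun i => t * x i).
Hypothesis pG : forall g, G g -> 0 <= p g.

Definition supp (s : seq I) (x : I -> R) := forall i, i \notin s -> x i = 0.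
Definition Dom (c : I -> R) (s : seq I) :=
  forall x g, supp s x -> G g -> dotf c x <= p (fun i => x i + g i).

Lemma dotfD c x y : dotf c (fun i => x i + y i) = dotf c x + dotf c y.
Proof. by rewrite /dotf -big_split /=; apply: eq_bigr => i _; rewrite mulrDr. Qed.
Lemma dotfZ c t x : dotf c (fun i => t * x i) = t * dotf c x.
Proof. by rewrite /dotf mulr_sumr; apply: eq_bigr => i _; ring. Qed.
Lemma dotfN c x : dotf c (fun i => - x i) = - dotf c x.
Proof. by rewrite /dotf -sumrN; apply: eq_bigr => i _; ring. Qed.
Lemma dotf0 c : dotf c (fun _ => 0) = 0.
Proof. by rewrite /dotf big1 // => i _; rewrite mulr0. Qed.

Lemma Dom_nil : Dom (fun _ => 0) [::].
Proof.
move=> x g sx Gg; have -> : (fun i => x i + g i) = g.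
  by apply: funext => i; rewrite sx ?add0r.
by rewrite /dotf big1 ?pG // => i _; rewrite mul0r.
Qed.

Lemma Dom_cons c a s : Dom c s -> exists c', Dom c' (a :: s).
Proof.
move=> Dc.
pose e := fun i : I => if i == a then (1 : R) else 0.
pose L := [set r | exists x g, [/\ supp s x, G g &
              r = dotf c x - p (fun i => x i - e i + g i)]].
have ubL : forall y g', supp s y -> G g' ->
    ubound L (p (fun i => y i + e i + g' i) - dotf c y).
  move=> y g' sy Gg' r [x [g [sx Gg ->]]].
  have h1 := Dc (fun i => x i + y i) (fun i => g i + g' i).
  have /h1 {}h1 : supp s (fun i => x i + y i).
    by move=> i ni /=; rewrite sx ?sy ?addr0.
  have /h1 {}h1 := Gadd Gg Gg'.
  have h2 := padd (fun i => x i - e i + g i) (fun i => y i + e i + g' i).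
  have E : (fun i => (x i - e i + g i) + (y i + e i + g' i)) =
            (fun i => (x i + y i) + (g i + g' i)).
    by apply: funext => i; ring.
  rewrite E in h2.
  rewrite dotfD in h1; rewrite lerBrDr.
  have h3 := le_trans h1 h2. lra.
have neL : L !=set0.
  exists (dotf c (fun _ => 0) - p (fun i => 0 - e i + 0)).
  by exists (fun _ => 0), (fun _ => 0); split.
set cv := sup L.
have cv_ub : forall y g', supp s y -> G g' ->
    cv <= p (fun i => y i + e i + g' i) - dotf c y.
  by move=> y g' sy Gg'; apply: ge_sup => //; exact: ubL.
have cv_lb : forall x g, supp s x -> G g ->
    dotf c x - p (fun i => x i - e i + g i) <= cv.
  move=> x g sx Gg; apply: sup_upper_bound.
    split => //; exists (p (fun i => 0 + e i + 0) - dotf c (fun _ => 0)).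
    by apply: ubL.
  by exists x, g.
exists (fun i => if i == a then cv else c i).
move=> x g sx Gg.
pose t := x a.
pose x' := fun i => if i == a then 0 else x i.
have sx' : supp s x'.
  move=> i ni; rewrite /x'; case: eqP => // /eqP ia; apply: sx.
  by rewrite in_cons negb_or ia.
have xE : x = (fun i => x' i + t * e i).
  apply: funext => i; rewrite /x' /e /t; case: eqP => [->|_]; ring.
have dE : dotf (fun i => if i == a then cv else c i) x = dotf c x' + cv * t.
  rewrite /dotf (bigD1 a) //= eqxx [in RHS](bigD1 a) //= /x' eqxx mulr0 add0r.
  rewrite addrC; congr (_ + _); apply: eq_bigr => i /negbTE ->; by [].
rewrite dE.
have [t0|tneq] := eqVneq t 0.
  rewrite t0 mulr0 addr0.
  have -> : (fun i => x i + g i) = (fun i => x' i + g i).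
    by rewrite {1}xE; apply: funext => i; rewrite t0 mul0r addr0.
  exact: Dc.
have [tlt|tgt|teq] := ltgtP t 0; last by move: tneq; rewrite teq eqxx.
-
  set u := - t.
  have ug : 0 < u by rewrite oppr_gt0.
  have ui : 0 < u^-1 by rewrite invr_gt0.
  have h := cv_lb (fun i => u^-1 * x' i) (fun i => u^-1 * g i).
  have /h {}h : supp s (fun i => u^-1 * x' i) by move=> i ni; rewrite sx' ?mulr0.
  have /h {}h := Gscale ui Gg.
  have E : (fun i => u^-1 * x' i - e i + u^-1 * g i) =
            (fun i => u^-1 * (x i + g i)).
    by apply: funext => i; rewrite xE /u; field; exact: tneq.
  rewrite E in h.
  rewrite phom // dotfZ in h.
  have := ler_wpM2l (ltW ug) h.
  rewrite mulrBr !mulrA mulfV ?gt_eqF // !mul1r => h'.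
  have -> : t = - u by rewrite opprK.
  by rewrite mulrN mulrC lerBlDl addrC -lerBlDl.
-
  have ti : 0 < t^-1 by rewrite invr_gt0.
  have h := cv_ub (fun i => t^-1 * x' i) (fun i => t^-1 * g i).
  have /h {}h : supp s (fun i => t^-1 * x' i) by move=> i ni; rewrite sx' ?mulr0.
  have /h {}h := Gscale ti Gg.
  have E : (fun i => t^-1 * x' i + e i + t^-1 * g i) =
            (fun i => t^-1 * (x i + g i)).
    by apply: funext => i; rewrite xE; field; rewrite gt_eqF.
  rewrite E in h.
  rewrite phom // dotfZ in h.
  have := ler_wpM2l (ltW tgt) h.
  rewrite mulrBr !mulrA mulfV ?gt_eqF // !mul1r => h'.
  by rewrite mulrC -lerBrDl.
Qed.

Lemma Dom_all : forall s, exists c, Dom c s.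
Proof.
elim=> [|a s [c Dc]]; first by exists (fun _ => 0); exact: Dom_nil.
exact: Dom_cons Dc.
Qed.

Theorem GL : exists c : I -> R,
  (forall x, dotf c x <= p x) /\ (forall g, G g -> 0 <= dotf c g).
Proof.
have [c Dc] := Dom_all (enum I).
have sa : forall x, supp (enum I) x by move=> x i; rewrite mem_enum.
exists c; split.
  move=> x; have := Dc x _ (sa x) G0.
  by have -> : (fun i => x i + 0) = x by apply: funext => i; rewrite addr0.
move=> g Gg; have := Dc (fun i => - g i) g (sa _) Gg.
have -> : (fun i => - g i + g i) = (fun _ => 0) by apply: funext => i; rewrite addNr.
rewrite dotfN => h; rewrite -oppr_le0; exact: le_trans h p0.
Qed.
End GL.


Section Cx.
Variable R : realType.
Local Notation C := (R[i]).
Local Notation Re := (@complex.Re R).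
Local Notation Im := (@complex.Im R).

Lemma ReD (x y : C) : Re (x + y) = Re x + Re y. Proof. by case: x; case: y. Qed.
Lemma ImD (x y : C) : Im (x + y) = Im x + Im y. Proof. by case: x; case: y. Qed.
Lemma ReN (x : C) : Re (- x) = - Re x. Proof. by case: x. Qed.
Lemma ImN (x : C) : Im (- x) = - Im x. Proof. by case: x. Qed.
Lemma ReB (x y : C) : Re (x - y) = Re x - Re y. Proof. by rewrite ReD ReN. Qed.
Lemma ImB (x y : C) : Im (x - y) = Im x - Im y. Proof. by rewrite ImD ImN. Qed.
Lemma Re0 : Re 0 = 0. Proof. by []. Qed.
Lemma Im0 : Im 0 = 0. Proof. by []. Qed.
Lemma Re1 : Re 1 = 1. Proof. by []. Qed.
Lemma Im1 : Im 1 = 0. Proof. by []. Qed.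
Lemma ReM (x y : C) : Re (x * y) = Re x * Re y - Im x * Im y. Proof. by case: x; case: y. Qed.
Lemma ImM (x y : C) : Im (x * y) = Re x * Im y + Im x * Re y.
Proof. by case: x => a b; case: y => c d /=; ring. Qed.
Lemma ReJ (x : C) : Re (conjc x) = Re x. Proof. by case: x. Qed.
Lemma ImJ (x : C) : Im (conjc x) = - Im x. Proof. by case: x. Qed.
Lemma ReR (a : R) : Re (a%:C)%C = a. Proof. by []. Qed.
Lemma ImR (a : R) : Im (a%:C)%C = 0. Proof. by []. Qed.
Lemma Re_sum (I : Type) (r : seq I) (P : pred I) (F : I -> C) :
  Re (\sum_(i <- r | P i) F i) = \sum_(i <- r | P i) Re (F i).
Proof. by apply: (big_morph _ ReD Re0). Qed.
Lemma Im_sum (I : Type) (r : seq I) (P : pred I) (F : I -> C) :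
  Im (\sum_(i <- r | P i) F i) = \sum_(i <- r | P i) Im (F i).
Proof. by apply: (big_morph _ ImD Im0). Qed.
Lemma ReZ (a : R) (x : C) : Re ((a%:C)%C * x) = a * Re x.
Proof. by rewrite ReM ReR ImR mul0r subr0. Qed.
Lemma ImZ (a : R) (x : C) : Im ((a%:C)%C * x) = a * Im x.
Proof. by rewrite ImM ReR ImR mul0r addr0. Qed.

Definition ip k (x y : 'cV[C]_k) : R :=
  \sum_i (Re (x i 0) * Re (y i 0) + Im (x i 0) * Im (y i 0)).

Lemma ipE k (x y : 'cV[C]_k) : ip x y = Re (\sum_i conjc (x i 0) * y i 0).
Proof. by rewrite Re_sum; apply: eq_bigr => i _; rewrite ReM ReJ ImJ; ring. Qed.

Lemma bilE n m (u : 'cV[C]_n) (A : 'M[C]_(n, m)) v : bil u A v = ip u (A *m v).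
Proof.
rewrite /bil -mulmxA mxE ipE; congr Re; apply: eq_bigr => i _.
by rewrite /adjmx !mxE.
Qed.

Lemma adjmxK k p (M : 'M[C]_(k, p)) : adjmx (adjmx M) = M.
Proof. by apply/matrixP => i j; rewrite /adjmx !mxE /cconj conjcK. Qed.

Lemma ip_adj k p (M : 'M[C]_(k, p)) u w : ip u (adjmx M *m w) = ip (M *m u) w.
Proof.
rewrite !ipE; congr Re.
transitivity (\sum_i \sum_j conjc (u i 0) * (conjc (M j i) * w j 0)).
  by apply: eq_bigr => i _; rewrite mxE mulr_sumr; apply: eq_bigr => j _; rewrite /adjmx !mxE.
rewrite exchange_big; apply: eq_bigr => j _.
rewrite mxE rmorph_sum mulr_suml; apply: eq_bigr => i _.
by rewrite rmorphM /=; ring.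
Qed.

Lemma ipC k (x y : 'cV[C]_k) : ip x y = ip y x.
Proof. by apply: eq_bigr => i _; ring. Qed.

Lemma ipDr k (x y z : 'cV[C]_k) : ip x (y + z) = ip x y + ip x z.
Proof. by rewrite /ip -big_split /=; apply: eq_bigr => i _; rewrite !mxE ReD ImD; ring. Qed.
Lemma ipNr k (x y : 'cV[C]_k) : ip x (- y) = - ip x y.
Proof. by rewrite /ip -sumrN; apply: eq_bigr => i _; rewrite !mxE ReN ImN; ring. Qed.
Lemma ipBr k (x y z : 'cV[C]_k) : ip x (y - z) = ip x y - ip x z.
Proof. by rewrite ipDr ipNr. Qed.
Lemma ipZr k (a : R) (x y : 'cV[C]_k) : ip x ((a%:C)%C *: y) = a * ip x y.
Proof. by rewrite /ip mulr_sumr; apply: eq_bigr => i _; rewrite !mxE ReZ ImZ; ring. Qed.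
Lemma ipDl k (x y z : 'cV[C]_k) : ip (y + z) x = ip y x + ip z x.
Proof. by rewrite !(ipC _ x) ipDr. Qed.
Lemma ipNl k (x y : 'cV[C]_k) : ip (- y) x = - ip y x.
Proof. by rewrite !(ipC _ x) ipNr. Qed.
Lemma ipBl k (x y z : 'cV[C]_k) : ip (y - z) x = ip y x - ip z x.
Proof. by rewrite ipDl ipNl. Qed.
Lemma ipZl k (a : R) (x y : 'cV[C]_k) : ip ((a%:C)%C *: y) x = a * ip y x.
Proof. by rewrite !(ipC _ x) ipZr. Qed.
Lemma ip0r k (x : 'cV[C]_k) : ip x 0 = 0.
Proof. by rewrite /ip big1 // => i _; rewrite mxE; ring. Qed.
Lemma ip0l k (x : 'cV[C]_k) : ip 0 x = 0.
Proof. by rewrite ipC ip0r. Qed.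

Lemma ip_ge0 k (x : 'cV[C]_k) : 0 <= ip x x.
Proof. by apply: sumr_ge0 => i _; rewrite -!expr2 addr_ge0 // sqr_ge0. Qed.

Lemma cvnorm_ge0 k (x : 'cV[C]_k) : 0 <= cvnorm x.
Proof. exact: sqrtr_ge0. Qed.

Lemma cvnorm_sq k (x : 'cV[C]_k) : cvnorm x ^+ 2 = ip x x.
Proof.
rewrite /cvnorm sqr_sqrtr; last exact: (ip_ge0 x).
by apply: eq_bigr => i _; rewrite !expr2.
Qed.

Lemma ip_cvC k (x : 'cV[C]_k) (r : 'cV[R]_k) : ip x (cvC r) = rdot r (reV x).
Proof. by apply: eq_bigr => i _; rewrite /cvC /reV !mxE ReR ImR; ring. Qed.

Lemma ip_const k (x : 'cV[C]_k) (rho : C) :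
  ip x (cconj rho *: const_mx 1) = Re (rho * sumv x).
Proof.
rewrite ipE /sumv mulr_sumr -[RHS]ReJ rmorph_sum; congr Re.
apply: eq_bigr => i _; rewrite !mxE /cconj mulr1 rmorphM mulrC.
by [].
Qed.

Lemma sumvD k (x y : 'cV[C]_k) : sumv (x + y) = sumv x + sumv y.
Proof. by rewrite /sumv -big_split; apply: eq_bigr => i _; rewrite mxE. Qed.
Lemma sumvN k (x : 'cV[C]_k) : sumv (- x) = - sumv x.
Proof. by rewrite /sumv -sumrN; apply: eq_bigr => i _; rewrite mxE. Qed.
Lemma sumvB k (x y : 'cV[C]_k) : sumv (x - y) = sumv x - sumv y.
Proof. by rewrite sumvD sumvN. Qed.
Lemma sumvZ k (a : C) (x : 'cV[C]_k) : sumv (a *: x) = a * sumv x.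
Proof. by rewrite /sumv mulr_sumr; apply: eq_bigr => i _; rewrite mxE. Qed.
Lemma sumv_const k (a : C) : sumv (a *: (const_mx 1 : 'cV[C]_k)) = a * k%:R.
Proof.
rewrite sumvZ /sumv; congr (_ * _).
by rewrite (eq_bigr (fun _ => 1)) ?sumr_const ?card_ord // => i _; rewrite mxE.
Qed.

Lemma ip_const1 k (x : 'cV[C]_k) : ip (const_mx 1) x = Re (sumv x).
Proof.
have := ip_const x 1; rewrite /cconj conjc1 scale1r mul1r => <-.
by rewrite ipC.
Qed.

Lemma ip_eq0 k (x : 'cV[C]_k) : ip x x = 0 -> forall y, ip x y = 0.
Proof.
have hpos : forall i : 'I_k, true ->
    0 <= Re (x i 0) * Re (x i 0) + Im (x i 0) * Im (x i 0).
  by move=> i _; rewrite -!expr2 addr_ge0 // sqr_ge0.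
move=> /(psumr_eq0P hpos) h y.
rewrite /ip big1 // => i _.
have := h i isT; move/eqP; rewrite -!expr2 paddr_eq0 ?sqr_ge0 //.
by rewrite !sqrf_eq0 => /andP[/eqP -> /eqP ->]; rewrite !mul0r addr0.
Qed.

Lemma CS k (x y : 'cV[C]_k) : ip x y <= cvnorm x * cvnorm y.
Proof.
set X := cvnorm x; set Y := cvnorm y.
have X0 : 0 <= X by exact: cvnorm_ge0.
have Y0 : 0 <= Y by exact: cvnorm_ge0.
have hx : ip x x = X ^+ 2 by rewrite cvnorm_sq.
have hy : ip y y = Y ^+ 2 by rewrite cvnorm_sq.
have [XY0|XYpos] := eqVneq (X * Y) 0.
  move: XY0 => /eqP; rewrite mulf_eq0 => /orP[] /eqP E.
    have hx0 : ip x x = 0 by rewrite hx E expr0n.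
    by rewrite (ip_eq0 hx0) E mul0r.
  have hy0 : ip y y = 0 by rewrite hy E expr0n.
  by rewrite ipC (ip_eq0 hy0) E mulr0.
have XYp : 0 < X * Y by rewrite lt0r XYpos mulr_ge0.
have h := ip_ge0 ((Y%:C)%C *: x - (X%:C)%C *: y).
rewrite !(ipBl, ipBr, ipZl, ipZr) (ipC y x) hx hy in h.
have h2 : 0 <= (X * Y) * (X * Y - ip x y) by nra.
by rewrite -subr_ge0; rewrite pmulr_rge0 in h2.
Qed.

Lemma cvnorm_le k (x : 'cV[C]_k) (a : R) : 0 <= a -> ip x x <= a ^+ 2 -> cvnorm x <= a.
Proof.
move=> a0 h; rewrite /cvnorm -(ger0_norm a0) -sqrtr_sqr ler_sqrt ?sqr_ge0 //.
Qed.

Lemma cvnorm_lt k (x : 'cV[C]_k) (a : R) : cvnorm x < a -> ip x x < a ^+ 2.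
Proof.
move=> h; have a0 : 0 <= a by apply: le_trans (ltW h); exact: cvnorm_ge0.
rewrite -cvnorm_sq; rewrite ltr_pXn2r // ?nnegrE //; exact: cvnorm_ge0.
Qed.

Lemma rdot_ge0 k (x y : 'cV[R]_k) : vle 0 x -> vle 0 y -> 0 <= rdot x y.
Proof. by move=> hx hy; apply: sumr_ge0 => i _; apply: mulr_ge0; [have := hx i | have := hy i]; rewrite mxE. Qed.

Lemma rdot_le k (l x y : 'cV[R]_k) : vle 0 l -> vle x y -> rdot l x <= rdot l y.
Proof.
move=> hl hxy; apply: ler_sum => i _; apply: ler_wpM2l; last exact: hxy.
by have := hl i; rewrite mxE.
Qed.

Lemma WDP (n m l q : nat) (A : 'M[C]_(n, m)) (alpha1 alpha2 : R) (B : 'M[C]_(l, n)) (b : 'cV[R]_l)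
  (D : 'M[C]_(q, m)) (d : 'cV[R]_q) v lam beta rho r u :
  feasP A alpha2 B D d v lam beta rho r -> S1 alpha1 B b u ->
  bil u A v <= objP alpha1 b lam beta rho.
Proof.
move=> [E _ _ _ [_ r0 l0]] [nu u0 su Bu].
have : ip u (A *m v - adjmx B *m cvC lam - beta + cvC r - cconj rho *: const_mx 1) = 0.
  by rewrite E ip0r.
rewrite !(ipDr, ipNr) ip_adj ip_cvC ip_cvC ip_const su mulr1 => h.
rewrite bilE /objP.
have h1 : rdot lam (reV (B *m u)) <= rdot lam b by apply: rdot_le.
have h2 : ip u beta <= alpha1 * cvnorm beta.
  apply: le_trans (CS u beta) _; apply: ler_wpM2r => //; exact: cvnorm_ge0.
have h3 : 0 <= rdot r (reV u) by apply: rdot_ge0.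
lra.
Qed.

End Cx.


Lemma lin_bound (R : realFieldType) (a c K : R) :
  (forall t, 0 <= t -> t * a + c <= K) -> a <= 0.
Proof.
move=> h; rewrite leNgt; apply/negP => a0.
have t0 : 0 <= (`|K - c| + 1) / a by rewrite divr_ge0 // ?ltW //; have := normr_ge0 (K - c); lra.
have := h _ t0; rewrite divfK ?gt_eqF // => h2.
have := ler_norm (K - c); lra.
Qed.

Lemma le_of_eq (R : numDomainType) (x y : R) : x = y -> x <= y.
Proof. by move=> ->. Qed.

Section K1.
Variable R : realType.
Local Notation C := (R[i]).
Local Notation Re := (@complex.Re R).
Local Notation Im := (@complex.Im R).
Variables (n m l q : nat) (A : 'M[C]_(n, m)) (alpha1 alpha2 : R)
  (B : 'M[C]_(l, n)) (b : 'cV[R]_l) (D : 'M[C]_(q, m)) (d : 'cV[R]_q)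
  (v : 'cV[C]_m) (val : R) (u0 : 'cV[C]_n).
Hypothesis Hu0 : S1strict alpha1 B b u0.
Hypothesis Hv : S2 alpha2 D d v.
Hypothesis Hval : forall u, S1 alpha1 B b u -> bil u A v <= val.

Local Notation I := ('I_1 + (('I_l + 'I_n) + 'I_1))%type.
Let c := A *m v.

Definition hh (u : 'cV[C]_n) (i : I) : R :=
  match i with
  | inl _ => val - ip u c
  | inr (inl (inl j)) => Re ((B *m u) j 0) - b j 0
  | inr (inl (inr k)) => - Re (u k 0)
  | inr (inr _) => ip u u - alpha1 ^+ 2
  end.

Definition GG (w : I -> R) :=
  exists a, 0 <= a /\ exists u, sumv u = 1 /\ forall i, a * hh u i <= w i.

Definition pm (w : I -> R) := \big[Order.max/w (inl ord0)]_(i : I) w i.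

Lemma pm_ge w i : w i <= pm w.
Proof. exact: le_bigmax. Qed.

Lemma pm_le w K : (forall i, w i <= K) -> pm w <= K.
Proof. by move=> h; apply: bigmax_le => // i _. Qed.

Lemma alpha1_gt0 : 0 < alpha1.
Proof. by case: Hu0 => h _ _ _; apply: le_lt_trans h; exact: cvnorm_ge0. Qed.

Lemma hh_conv a a' u u' : 0 <= a -> 0 <= a' -> 0 < a + a' ->
  forall i, (a + a') * hh (((a + a')^-1)%:C%C *: ((a%:C)%C *: u + (a'%:C)%C *: u')) i
            <= a * hh u i + a' * hh u' i.
Proof.
move=> a0 a'0 s0 i.
have s0' : a + a' != 0 by rewrite gt_eqF.
case: i => [_|[[j|k]|_]] /=.
- rewrite !(ipZl, ipDl); apply: le_of_eq; field; exact: s0'.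
- rewrite -!scalemxAr mulmxDr -!scalemxAr !mxE !(ReD, ReZ); apply: le_of_eq; field; exact: s0'.
- rewrite !mxE !(ReD, ReZ); apply: le_of_eq; field; exact: s0'.
- rewrite !(ipZl, ipDl, ipZr, ipDr) (ipC u' u).
  have hN := ip_ge0 (u - u'); rewrite !(ipBl, ipBr) (ipC u' u) in hN.
  set P := ip u u in hN *; set Q := ip u u' in hN *; set S := ip u' u' in hN *.
  rewrite -subr_ge0.
  have -> : a * (P - alpha1 ^+ 2) + a' * (S - alpha1 ^+ 2) -
    (a + a') * ((a + a')^-1 * (a * ((a + a')^-1 * (a * P + a' * Q)) +
      a' * ((a + a')^-1 * (a * Q + a' * S))) - alpha1 ^+ 2)
    = a * a' / (a + a') * (P - Q - (Q - S)).
    by field.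
  by rewrite mulr_ge0 // divr_ge0 // ?mulr_ge0 // ltW.
Qed.

Lemma hh_infeas u : sumv u = 1 -> exists i, 0 <= hh u i.
Proof.
move=> su; case: (boolP [exists i, 0 <= hh u i]) => [/existsP//|/existsPn h].
have h' : forall i, hh u i < 0 by move=> i; rewrite ltNge; exact: h.
have S1u : S1 alpha1 B b u.
  split => //.
  - apply: cvnorm_le; first exact: ltW alpha1_gt0.
    by have := h' (inr (inr ord0)) => /=; rewrite subr_lt0 => /ltW.
  - by move=> k; have := h' (inr (inl (inr k))) => /=; rewrite !mxE oppr_lt0 => /ltW.
  - by move=> j; have := h' (inr (inl (inl j))) => /=; rewrite !mxE subr_lt0 => /ltW.
have := Hval S1u; rewrite bilE -/c.
by have := h' (inl ord0) => /=; lra.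
Qed.

Lemma K1_cf : exists cf : I -> R,
  (forall w, dotf cf w <= pm w) /\ (forall g, GG g -> 0 <= dotf cf g).
Proof.
apply: GL.
- move=> x y; apply: pm_le => i.
  by have := pm_ge x i; have := pm_ge y i; lra.
- move=> t x t0; apply/le_anti/andP; split.
    apply: pm_le => i; apply: ler_wpM2l; [exact: ltW | exact: pm_ge].
  rewrite mulrC -ler_pdivlMr //; apply: pm_le => i; rewrite ler_pdivlMr // mulrC.
  exact: (pm_ge (fun i => t * x i) i).
- by apply: pm_le.
- case: Hu0 => _ _ su _; exists 0; split => //; exists u0; split => // i.
  by rewrite mul0r.
- move=> x y [a [a0 [u [su hu]]]] [a' [a'0 [u' [su' hu']]]].
  have [s0|s0] := eqVneq (a + a') 0.
    have [ea ea'] : a = 0 /\ a' = 0.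
      by move: s0 => /eqP; rewrite paddr_eq0 // => /andP[/eqP -> /eqP ->].
    exists 0; split => //; exists u; split => // i; rewrite mul0r.
    have := hu i; have := hu' i; rewrite ea ea' !mul0r; lra.
  have sp : 0 < a + a' by rewrite lt0r s0 addr_ge0.
  exists (a + a'); split; first exact: ltW.
  exists (((a + a')^-1)%:C%C *: ((a%:C)%C *: u + (a'%:C)%C *: u')); split.
    rewrite sumvZ sumvD !sumvZ su su' !mulr1 -rmorphD -rmorphM mulVf //.
  move=> i; have := @hh_conv a a' u u' a0 a'0 sp i; have := hu i; have := hu' i; lra.
- move=> t x t0 [a [a0 [u [su hu]]]]; exists (t * a); split.
    by rewrite mulr_ge0 // ltW.
  exists u; split => // i; rewrite -mulrA; apply: ler_wpM2l; [exact: ltW | exact: hu].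
- move=> g [a [a0 [u [su hu]]]].
  have [i hi] := hh_infeas su.
  apply: le_trans (pm_ge g i); apply: le_trans (hu i); exact: mulr_ge0.
Qed.

Lemma dotf_single (cf : I -> R) i x : dotf cf (fun j => if j == i then x else 0) = cf i * x.
Proof.
rewrite /dotf (bigD1 i) //= eqxx big1 ?addr0 // => j /negbTE ->; exact: mulr0.
Qed.

Lemma hh_u0_neg i : i != inl ord0 -> hh u0 i < 0.
Proof.
case: Hu0 => nu0 pu0 su0 bu0.
case: i => [o|[[j|k]|o]] /=.
- by rewrite (ord1 o) eqxx.
- by move=> _; rewrite subr_lt0; have := bu0 j; rewrite mxE.
- by move=> _; rewrite oppr_lt0; have := pu0 k; rewrite !mxE.
- by move=> _; rewrite subr_lt0; exact: cvnorm_lt.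
Qed.

Lemma K1_norm : exists cf : I -> R,
  cf (inl ord0) = 1 /\ (forall i, 0 <= cf i) /\
  (forall u, sumv u = 1 -> 0 <= dotf cf (hh u)).
Proof.
have [cf [cfp cfG]] := K1_cf.
have cf0 : forall i, 0 <= cf i.
  move=> i; have := cfp (fun j => if j == i then -1 else 0).
  rewrite dotf_single => h; rewrite -oppr_le0 -(mulrN1 (cf i)).
  apply: le_trans h _; apply: pm_le => j /=; case: (_ == _) => //; by rewrite oppr_le0 ler01.
have cfs : 1 <= \sum_i cf i.
  have h := cfp (fun _ => -1).
  have h2 : pm (fun _ : I => -1) <= -1 by apply: pm_le.
  have E : dotf cf (fun _ => -1) = - \sum_i cf i.
    by rewrite /dotf -sumrN; apply: eq_bigr => ? _; rewrite mulrN1.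
  rewrite E in h; lra.
have cfH : forall u, sumv u = 1 -> 0 <= dotf cf (hh u).
  move=> u su; apply: cfG; exists 1; split => //; exists u; split => // ?.
  by rewrite mul1r.
have c0pos : 0 < cf (inl ord0).
  rewrite lt0r cf0 andbT; apply/negP => /eqP c00.
  have hneg : forall i, true -> 0 <= - (cf i * hh u0 i).
    move=> i _; rewrite oppr_ge0.
    have [->|ne] := eqVneq i (inl ord0); first by rewrite c00 mul0r.
    by rewrite mulr_ge0_le0 // ltW // hh_u0_neg.
  have hs : \sum_i - (cf i * hh u0 i) = 0.
    apply/le_anti/andP; split; last exact: sumr_ge0.
    rewrite sumrN oppr_le0; apply: cfH; by case: Hu0.
  have all0 : forall i, cf i = 0.
    move=> i; have := @psumr_eq0P _ _ _ _ hneg hs i isT; move/eqP; rewrite oppr_eq0 mulf_eq0.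
    case/orP => /eqP // h; have [->|ne] := eqVneq i (inl ord0) => //.
    by have := hh_u0_neg ne; rewrite h ltxx.
  by move: cfs; rewrite big1 // ?ler10 // => i _; exact: all0.
exists (fun i => cf i / cf (inl ord0)); split; first by rewrite divff // gt_eqF.
split; first by move=> i; rewrite divr_ge0 // ltW.
move=> u su; have := cfH u su; rewrite /dotf.
have -> : \sum_i cf i / cf (inl ord0) * hh u i = (cf (inl ord0))^-1 * \sum_i cf i * hh u i.
  by rewrite mulr_sumr; apply: eq_bigr => i _; rewrite mulrAC mulrC.
move=> h; apply: mulr_ge0 => //; rewrite invr_ge0 ltW //.
Qed.

Lemma n_gt0 : (0 < n)%N.
Proof.
case: Hu0 => _ _ su _; rewrite lt0n; apply/eqP => n0; move: su; rewrite /sumv big1.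
  by move/eqP; rewrite eq_sym oner_eq0.
by move=> [i hi] _; exfalso; move: hi; rewrite n0.
Qed.

Lemma K1_main : exists lam beta rho r,
  feasP A alpha2 B D d v lam beta rho r /\ objP alpha1 b lam beta rho <= val.
Proof.
have [cf [c01 [cfp cfH]]] := K1_norm.
pose lam := \col_j cf (inr (inl (inl j))) : 'cV[R]_l.
pose rr := \col_k cf (inr (inl (inr k))) : 'cV[R]_n.
pose mu := cf (inr (inr ord0)).
pose c' := c - adjmx B *m cvC lam + cvC rr.
have Phi : forall u, sumv u = 1 ->
    ip u c' - mu * ip u u <= val - rdot lam b - mu * alpha1 ^+ 2.
  move=> u su; have := cfH u su; rewrite /dotf !big_sumType /= !big_ord1 /= c01 mul1r.
  rewrite /c' !(ipDr, ipNr) ip_adj !ip_cvC.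
  have e1 : \sum_(j < l) cf (inr (inl (inl j))) * (Re ((B *m u) j 0) - b j 0)
      = rdot lam (reV (B *m u)) - rdot lam b.
    by rewrite /rdot -sumrB; apply: eq_bigr => j _; rewrite !mxE; ring.
  have e2 : \sum_(k < n) cf (inr (inl (inr k))) * - Re (u k 0) = - rdot rr (reV u).
    by rewrite /rdot -sumrN; apply: eq_bigr => k _; rewrite !mxE; ring.
  rewrite e1 e2 /mu; lra.
have nR : (n%:R : C) != 0 by rewrite pnatr_eq0 -lt0n n_gt0.
pose kap := (sumv c' - ((2 * mu)%:C)%C) / n%:R.
pose beta := c' - kap *: (const_mx 1 : 'cV[C]_n).
pose rho := conjc kap.
have ccr : cconj rho = kap by rewrite /cconj /rho conjcK.
have c'E : c' = beta + kap *: const_mx 1 by rewrite /beta subrK.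
have sb : sumv beta = ((2 * mu)%:C)%C.
  by rewrite /beta sumvB sumv_const /kap divfK //; ring.
have mu0 : 0 <= mu := cfp _.
case: Hv => nv pv sv dv.
exists lam, beta, rho, rr; split.
  split => //; last split => //.
  - rewrite ccr /beta /c' /c; apply/matrixP => i j; rewrite !mxE; ring.
  - by move=> k; rewrite !mxE.
  - by move=> k; rewrite !mxE.
have Nsq : ip beta beta = cvnorm beta ^+ 2 by rewrite cvnorm_sq.
have N0 := cvnorm_ge0 beta.
rewrite /objP.
have [mueq|mupos] := eqVneq mu 0.
  have ub : forall t, 0 <= t -> t * ip beta beta + Re rho <= val - rdot lam b.
    move=> t t0.
    pose ut := (((n%:R : R)^-1)%:C)%C *: (const_mx 1 : 'cV[C]_n) + (t%:C)%C *: beta.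
    have sut : sumv ut = 1.
      rewrite /ut sumvD sumv_const sumvZ sb mueq mulr0 mulr0 addr0.
      by rewrite -(rmorph_nat (real_complex R)) -rmorphM mulVf // pnatr_eq0 -lt0n n_gt0.
    have := Phi ut sut; rewrite mueq !mul0r !subr0 c'E ipDr -ccr ip_const sut mulr1.
    rewrite /ut ipDl !ipZl ip_const1 sb mueq mulr0; rewrite /= mulr0 add0r => h.
    exact: h.
  have bb : ip beta beta <= 0 := lin_bound ub.
  have Nz : cvnorm beta = 0.
    by apply/eqP; rewrite -sqrf_eq0 -Nsq; apply/eqP/le_anti; rewrite bb ip_ge0.
  have := ub 0 (lexx _); rewrite mul0r Nz mulr0; lra.
have mup : 0 < mu by rewrite lt0r mupos.
pose us := (((2 * mu)^-1)%:C)%C *: beta.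
have sus : sumv us = 1 by rewrite sumvZ sb -rmorphM mulVf // mulf_neq0 // pnatr_eq0.
have := Phi us sus; rewrite c'E ipDr -ccr ip_const sus mulr1 /us !(ipZl, ipZr) Nsq.
set N := cvnorm beta => h.
have key : alpha1 * N <= mu * alpha1 ^+ 2 + N ^+ 2 / (4 * mu).
  rewrite -subr_ge0.
  have -> : mu * alpha1 ^+ 2 + N ^+ 2 / (4 * mu) - alpha1 * N
      = (2 * mu * alpha1 - N) ^+ 2 / (4 * mu).
    by field; rewrite mupos.
  by rewrite divr_ge0 ?sqr_ge0 // mulr_ge0 // ltW.
have e : (2 * mu)^-1 * N ^+ 2 - mu * ((2 * mu)^-1 * ((2 * mu)^-1 * N ^+ 2))
    = N ^+ 2 / (4 * mu).
  by field; rewrite mupos.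
lra.
Qed.


End K1.


Section Norms.
Variable R : realType.
Local Notation C := (R[i]).
Local Notation Re := (@complex.Re R).
Local Notation Im := (@complex.Im R).

Lemma reVE k (x : 'cV[C]_k) i : reV x i 0 = Re (x i 0). Proof. by rewrite mxE. Qed.
Lemma mxDE a b (x y : 'M[C]_(a, b)) i j : (x + y) i j = x i j + y i j. Proof. by rewrite mxE. Qed.
Lemma mxZE a b (k : C) (x : 'M[C]_(a, b)) i j : (k *: x) i j = k * x i j. Proof. by rewrite mxE. Qed.
Lemma mxNE a b (x : 'M[C]_(a, b)) i j : (- x) i j = - x i j. Proof. by rewrite mxE. Qed.

Lemma cvnormD k (x y : 'cV[C]_k) : cvnorm (x + y) <= cvnorm x + cvnorm y.
Proof.
apply: cvnorm_le; first by rewrite addr_ge0 // cvnorm_ge0.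
rewrite ipDl !ipDr (ipC y x) -!cvnorm_sq.
have := CS x y; lra.
Qed.

Lemma cvnormZ k (a : R) (x : 'cV[C]_k) : 0 <= a -> cvnorm ((a%:C)%C *: x) = a * cvnorm x.
Proof.
move=> a0; have e : ip ((a%:C)%C *: x) ((a%:C)%C *: x) = a ^+ 2 * ip x x.
  by rewrite ipZl ipZr mulrA -expr2.
rewrite /cvnorm.
have -> : (\sum_i (Re (((a%:C)%C *: x) i 0) ^+ 2 + Im (((a%:C)%C *: x) i 0) ^+ 2))
   = a ^+ 2 * \sum_i (Re (x i 0) ^+ 2 + Im (x i 0) ^+ 2).
  rewrite mulr_sumr; apply: eq_bigr => i _; rewrite !mxE ReZ ImZ; ring.
by rewrite sqrtrM ?sqr_ge0 // sqrtr_sqr ger0_norm.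
Qed.

Lemma ip_conv k a a' (u u' : 'cV[C]_k) : 0 <= a -> 0 <= a' -> 0 < a + a' ->
  (a + a') * ip (((a + a')^-1)%:C%C *: ((a%:C)%C *: u + (a'%:C)%C *: u'))
                (((a + a')^-1)%:C%C *: ((a%:C)%C *: u + (a'%:C)%C *: u'))
  <= a * ip u u + a' * ip u' u'.
Proof.
move=> a0 a'0 s0.
rewrite !(ipZl, ipDl, ipZr, ipDr) (ipC u' u).
have hN := ip_ge0 (u - u'); rewrite !(ipBl, ipBr) (ipC u' u) in hN.
set P := ip u u in hN *; set Q := ip u u' in hN *; set S := ip u' u' in hN *.
rewrite -subr_ge0.
have -> : a * P + a' * S -
    (a + a') * ((a + a')^-1 * (a * ((a + a')^-1 * (a * P + a' * Q)) +
      a' * ((a + a')^-1 * (a * Q + a' * S))))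
    = a * a' / (a + a') * (P - Q - (Q - S)).
  by field; rewrite gt_eqF.
by rewrite mulr_ge0 // divr_ge0 // ?mulr_ge0 // ltW.
Qed.

Lemma S2_conv (m q : nat) (alpha2 : R) (D : 'M[C]_(q, m)) (d : 'cV[R]_q) a a' v v' :
  0 <= a -> 0 <= a' -> 0 < a + a' -> S2 alpha2 D d v -> S2 alpha2 D d v' ->
  S2 alpha2 D d (((a + a')^-1)%:C%C *: ((a%:C)%C *: v + (a'%:C)%C *: v')).
Proof.
move=> a0 a'0 s0 [nv pv sv dv] [nv' pv' sv' dv'].
have s0' : a + a' != 0 by rewrite gt_eqF.
have al0 : 0 <= alpha2 by apply: le_trans nv; exact: cvnorm_ge0.
split.
- apply: cvnorm_le => //.
  have h := ip_conv v v' a0 a'0 s0.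
  have h1 : ip v v <= alpha2 ^+ 2.
    by rewrite -cvnorm_sq !expr2; have := cvnorm_ge0 v; have := cvnorm_ge0 v'; nra.
  have h2 : ip v' v' <= alpha2 ^+ 2.
    by rewrite -cvnorm_sq !expr2; have := cvnorm_ge0 v; have := cvnorm_ge0 v'; nra.
  rewrite -(ler_pM2l s0); apply: le_trans h _.
  have : a * ip v v <= a * alpha2 ^+ 2 by apply: ler_wpM2l.
  have : a' * ip v' v' <= a' * alpha2 ^+ 2 by apply: ler_wpM2l.
  lra.
- move=> i; have := pv i; have := pv' i; rewrite !mxE !(ReZ, ReD) => h h'.
  apply: mulr_ge0; first by rewrite invr_ge0 ltW.
  by apply: addr_ge0; apply: mulr_ge0.
- rewrite sumvZ sumvD !sumvZ sv sv' !mulr1 -rmorphD -rmorphM mulVf //.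
- move=> i; have := dv i; have := dv' i.
  rewrite !reVE -!scalemxAr mulmxDr -!scalemxAr !(mxDE, mxZE) !(ReZ, ReD) => h h'.
  rewrite ler_pdivlMl //.
  have : a * d i 0 <= a * Re ((D *m v) i 0) by apply: ler_wpM2l.
  have : a' * d i 0 <= a' * Re ((D *m v') i 0) by apply: ler_wpM2l.
  lra.
Qed.
End Norms.

Section M.
Variable R : realType.
Local Notation C := (R[i]).
Local Notation Re := (@complex.Re R).
Local Notation Im := (@complex.Im R).
Variables (n m l q : nat) (A : 'M[C]_(n, m)) (alpha1 alpha2 : R)
  (B : 'M[C]_(l, n)) (b : 'cV[R]_l) (D : 'M[C]_(q, m)) (d : 'cV[R]_q)
  (vs : 'cV[C]_m) (lam1 : 'cV[R]_l) (beta1 : 'cV[C]_n) (rho1 : C) (r1 : 'cV[R]_n).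
Hypothesis Hopt : optP A alpha1 alpha2 B b D d vs lam1 beta1 rho1 r1.
Hypothesis al0 : 0 <= alpha1.
Let pv := objP alpha1 b lam1 beta1 rho1.

Definition EE (v : 'cV[C]_m) (lam : 'cV[R]_l) (rho : C) (r : 'cV[R]_n) : 'cV[C]_n :=
  A *m v - adjmx B *m cvC lam + cvC r - cconj rho *: const_mx 1.
Definition dom v (lam : 'cV[R]_l) (r : 'cV[R]_n) :=
  [/\ S2 alpha2 D d v, vle 0 lam & vle 0 r].
Local Notation I := ('I_1 + ('I_n + 'I_n))%type.
Definition tw (w : I -> R) := w (inl ord0).
Definition zw (w : I -> R) : 'cV[C]_n :=
  \col_i ((w (inr (inl i)) +i* w (inr (inr i)))%C).
Definition mk (t : R) (z : 'cV[C]_n) : I -> R := fun i =>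
  match i with inl _ => t | inr (inl k) => Re (z k 0) | inr (inr k) => Im (z k 0) end.
Definition pp w := tw w + alpha1 * cvnorm (zw w).
Definition GM (w : I -> R) := exists a, 0 <= a /\ exists v lam rho r,
  [/\ dom v lam r, zw w = (a%:C)%C *: EE v lam rho r &
      a * (rdot lam b + Re rho - pv) <= tw w].

Lemma zwD x y : zw (fun i => x i + y i) = zw x + zw y.
Proof. by apply/matrixP => i j; rewrite !mxE. Qed.
Lemma zwZ t x : zw (fun i => t * x i) = (t%:C)%C *: zw x.
Proof. by apply/matrixP => i j; rewrite !mxE /=; apply/eqP; rewrite eq_complex /=; apply/andP; split; apply/eqP; ring. Qed.
Lemma zw0 : zw (fun _ => 0) = 0.
Proof. by apply/matrixP => i j; rewrite !mxE. Qed.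
Lemma zw_mk t z : zw (mk t z) = z.
Proof. by apply/matrixP => i j; rewrite !mxE (ord1 j) /=; case: (z i 0). Qed.
Lemma cvnorm0 k : cvnorm (0 : 'cV[C]_k) = 0.
Proof. by rewrite /cvnorm big1 ?sqrtr0 // => i _; rewrite mxE expr0n /= addr0. Qed.

Lemma cvC_comb k s a a' (x x' : 'cV[R]_k) :
  cvC (s *: (a *: x + a' *: x')) = (s%:C)%C *: ((a%:C)%C *: cvC x + (a'%:C)%C *: cvC x').
Proof. by apply/matrixP => i j; rewrite !mxE !(rmorphM, rmorphD). Qed.

Lemma conj_comb (s a a' : R) (rho rho' : C) :
  cconj ((s%:C)%C * ((a%:C)%C * rho + (a'%:C)%C * rho')) =
  (s%:C)%C * ((a%:C)%C * cconj rho + (a'%:C)%C * cconj rho').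
Proof.
case: rho => x y; case: rho' => x' y'; apply/eqP; rewrite eq_complex /=.
by apply/andP; split; apply/eqP; ring.
Qed.

Lemma EE_comb a a' v v' lam lam' rho rho' r r' : 0 < a + a' ->
  ((a + a')%:C)%C *: EE (((a + a')^-1)%:C%C *: ((a%:C)%C *: v + (a'%:C)%C *: v'))
     ((a + a')^-1 *: (a *: lam + a' *: lam'))
     (((a + a')^-1)%:C%C * ((a%:C)%C * rho + (a'%:C)%C * rho'))
     ((a + a')^-1 *: (a *: r + a' *: r'))
  = (a%:C)%C *: EE v lam rho r + (a'%:C)%C *: EE v' lam' rho' r'.
Proof.
move=> s0.
have sC : ((a%:C)%C + (a'%:C)%C : C) != 0.
  by rewrite -rmorphD /= eq_complex /= gt_eqF.
rewrite /EE !cvC_comb -!scalemxAr !mulmxDr -!scalemxAr conj_comb fmorphV rmorphD.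
apply/matrixP => i j; rewrite !(mxDE, mxZE, mxNE); field; exact: sC.
Qed.

Lemma rdot_comb k s a a' (x x' y : 'cV[R]_k) :
  rdot (s *: (a *: x + a' *: x')) y = s * (a * rdot x y + a' * rdot x' y).
Proof.
rewrite /rdot !mulr_sumr -big_split /= mulr_sumr; apply: eq_bigr => i _; rewrite !mxE; ring.
Qed.

Lemma feas_vs : S2 alpha2 D d vs.
Proof. by case: Hopt => [[_ dv nv sv [pv' _ _]] _]; split. Qed.

Lemma EE_feas v lam rho r : dom v lam r ->
  feasP A alpha2 B D d v lam (EE v lam rho r) rho r.
Proof.
case=> [[nv pv' sv dv] l0 r0]; split; [| by [] | by [] | by [] | by split].
rewrite /EE; apply/matrixP => i j; rewrite !(mxDE, mxZE, mxNE) [X in _ = X]mxE; ring.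
Qed.

Lemma M_cf : exists cf : I -> R,
  (forall w, dotf cf w <= pp w) /\ (forall g, GM g -> 0 <= dotf cf g).
Proof.
apply: GL.
- move=> x y; rewrite /pp /tw zwD.
  have := cvnormD (zw x) (zw y); have := ler_wpM2l al0 (cvnormD (zw x) (zw y)).
  lra.
- move=> t x t0; rewrite /pp /tw zwZ cvnormZ ?ltW //; ring.
- by rewrite /pp /tw zw0 cvnorm0 mulr0 addr0.
- exists 0; split => //; exists vs, 0, 0, 0; split => //.
  + split; [exact: feas_vs | by move=> i; rewrite mxE | by move=> i; rewrite mxE].
  + by rewrite zw0 scale0r.
  + by rewrite mul0r.
- move=> x y [a [a0 [v [lam [rho [r [dx zx tx]]]]]]]
               [a' [a'0 [v' [lam' [rho' [r' [dy zy ty]]]]]]].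
  have [s0|s0] := eqVneq (a + a') 0.
    have [ea ea'] : a = 0 /\ a' = 0.
      by move: s0 => /eqP; rewrite paddr_eq0 // => /andP[/eqP -> /eqP ->].
    exists 0; split => //; exists v, lam, rho, r; split => //.
      by rewrite zwD zx zy ea ea' !scale0r addr0.
    rewrite /tw /= mul0r; move: tx ty; rewrite /tw ea ea' !mul0r; lra.
  have sp : 0 < a + a' by rewrite lt0r s0 addr_ge0.
  exists (a + a'); split; first exact: ltW.
  case: dx => [S2v l0 r0]; case: dy => [S2v' l0' r0'].
  exists (((a + a')^-1)%:C%C *: ((a%:C)%C *: v + (a'%:C)%C *: v')),
         ((a + a')^-1 *: (a *: lam + a' *: lam')),
         (((a + a')^-1)%:C%C * ((a%:C)%C * rho + (a'%:C)%C * rho')),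
         ((a + a')^-1 *: (a *: r + a' *: r')); split.
  + split; first exact: S2_conv.
      move=> i; rewrite !mxE; apply: mulr_ge0; first by rewrite invr_ge0 ltW.
      by apply: addr_ge0; apply: mulr_ge0 => //; have := l0 i; have := l0' i; rewrite !mxE.
    move=> i; rewrite !mxE; apply: mulr_ge0; first by rewrite invr_ge0 ltW.
    by apply: addr_ge0; apply: mulr_ge0 => //; have := r0 i; have := r0' i; rewrite !mxE.
  + by rewrite zwD zx zy EE_comb.
  + rewrite /tw /= rdot_comb ReZ ReD !ReZ.
    have -> : (a + a') * ((a + a')^-1 * (a * rdot lam b + a' * rdot lam' b) +
        (a + a')^-1 * (a * Re rho + a' * Re rho') - pv)
      = a * (rdot lam b + Re rho - pv) + a' * (rdot lam' b + Re rho' - pv).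
      by field; rewrite gt_eqF.
    move: tx ty; rewrite /tw; lra.
- move=> t x t0 [a [a0 [v [lam [rho [r [dx zx tx]]]]]]].
  exists (t * a); split; first by rewrite mulr_ge0 // ltW.
  exists v, lam, rho, r; split => //.
    by rewrite zwZ zx scalerA -rmorphM.
  by rewrite /tw -mulrA; apply: ler_wpM2l => //; exact: ltW.
- move=> g [a [a0 [v [lam [rho [r [dx zx tx]]]]]]].
  have feas := EE_feas rho dx.
  have := (proj2 Hopt) _ _ _ _ _ feas; rewrite -/pv /objP => h.
  rewrite /pp zx cvnormZ //.
  have : 0 <= a * (rdot lam b + alpha1 * cvnorm (EE v lam rho r) + Re rho - pv).
    by apply: mulr_ge0 => //; rewrite subr_ge0.
  move: tx; rewrite /tw; lra.
Qed.

Lemma rdot0l k (x : 'cV[R]_k) : rdot 0 x = 0.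
Proof. by rewrite /rdot big1 // => i _; rewrite mxE mul0r. Qed.

Lemma rdot_single k (j : 'I_k) (t : R) (x : 'cV[R]_k) :
  rdot (\col_i (if i == j then t else 0)) x = t * x j 0.
Proof.
rewrite /rdot (bigD1 j) //= big1 ?addr0; first by rewrite mxE eqxx.
by move=> i /negbTE ne; rewrite mxE ne mul0r.
Qed.

Lemma vle_single k (j : 'I_k) (t : R) : 0 <= t -> vle 0 (\col_i (if i == j then t else 0)).
Proof. by move=> t0 i; rewrite !mxE; case: ifP. Qed.

Lemma Re_conj_self (t : R) (z : C) :
  Re ((t%:C)%C * conjc z * z) = t * (Re z ^+ 2 + Im z ^+ 2).
Proof. by case: z => x y /=; ring. Qed.

Lemma M_main : exists y, S1 alpha1 B b y /\
  forall v, S2 alpha2 D d v -> pv <= bil y A v.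
Proof.
have [cf [cfp cfG]] := M_cf.
pose s := cf (inl ord0).
pose y : 'cV[C]_n := \col_i ((cf (inr (inl i)) +i* cf (inr (inr i)))%C).
have dotE : forall t z, dotf cf (mk t z) = s * t + ip y z.
  move=> t z; rewrite /dotf !big_sumType /= big_ord1 /ip -big_split /=.
  by congr (_ + _); apply: eq_bigr => i _; rewrite mxE.
have pmk : forall t z, pp (mk t z) = t + alpha1 * cvnorm z.
  by move=> t z; rewrite /pp /tw zw_mk.
have s1 : s = 1.
  have h1 := cfp (mk 1 0); have h2 := cfp (mk (-1) 0).
  rewrite dotE pmk cvnorm0 ip0r in h1; rewrite dotE pmk cvnorm0 ip0r in h2.
  lra.
have key : forall v lam rho r, dom v lam r ->
    pv <= rdot lam b + Re rho + bil y A v - rdot lam (reV (B *m y))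
          + rdot r (reV y) - Re (rho * sumv y).
  move=> v lam rho r dx.
  have G1 : GM (mk (rdot lam b + Re rho - pv) (EE v lam rho r)).
    exists 1; split => //; exists v, lam, rho, r; split => //.
      by rewrite zw_mk scale1r.
    by rewrite mul1r /tw.
  have := cfG _ G1; rewrite dotE s1 mul1r /EE !(ipDr, ipNr) ip_adj !ip_cvC ip_const bilE.
  lra.
have C0 := key vs 0 0 0 (And3 feas_vs (fun i => lexx _) (fun i => lexx _)).
rewrite !rdot0l mul0r /= in C0.
exists y; split; last first.
  move=> v S2v; have := key v 0 0 0 (And3 S2v (fun i => lexx _) (fun i => lexx _)).
  rewrite !rdot0l mul0r /=; lra.
split.
-
  have h := cfp (mk 0 y); rewrite dotE pmk mulr0 add0r add0r -cvnorm_sq in h.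
  have N0 := cvnorm_ge0 y.
  have [Nz|Np] := eqVneq (cvnorm y) 0; first by rewrite Nz.
  have Npos : 0 < cvnorm y by rewrite lt0r Np.
  rewrite expr2 in h; nra.
-
  move=> k; rewrite mxE; rewrite -oppr_le0.
  apply: (@lin_bound _ _ (pv - rdot 0 b - Re (0 : C) - bil y A vs) 0) => t t0.
  have := key vs 0 0 (\col_i (if i == k then t else 0))
    (And3 feas_vs (fun i => lexx _) (vle_single k t0)).
  rewrite !rdot0l rdot_single mul0r /= !mxE; lra.
-
  pose del := sumv y - 1.
  have hd : Re del ^+ 2 + Im del ^+ 2 <= 0.
    apply: (@lin_bound _ _ (pv - bil y A vs) 0) => t t0.
    have := key vs 0 ((t%:C)%C * conjc del) 0
      (And3 feas_vs (fun i => lexx _) (fun i => lexx _)).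
    rewrite !rdot0l.
    have : Re ((t%:C)%C * conjc del * sumv y) - Re ((t%:C)%C * conjc del)
         = t * (Re del ^+ 2 + Im del ^+ 2).
      rewrite -Re_conj_self /del -ReB; congr Re; ring.
    lra.
  have : Re del ^+ 2 + Im del ^+ 2 = 0.
    by apply/le_anti; rewrite hd addr_ge0 // sqr_ge0.
  move/eqP; rewrite paddr_eq0 ?sqr_ge0 // !sqrf_eq0 => /andP[/eqP hr /eqP hi].
  have : del = 0 by apply/eqP; rewrite eq_complex hr hi /= !eqxx.
  by move/eqP; rewrite subr_eq0 => /eqP.
-
  move=> j; rewrite mxE; rewrite -subr_le0.
  apply: (@lin_bound _ _ (pv - bil y A vs) 0) => t t0.
  have := key vs (\col_i (if i == j then t else 0)) 0 0
    (And3 feas_vs (vle_single j t0) (fun i => lexx _)).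
  rewrite !rdot0l !rdot_single mul0r /= !mxE; lra.
Qed.
End M.


Section Mirror.
Variable R : realType.
Local Notation C := (R[i]).
Local Notation Re := (@complex.Re R).

Lemma reV_neg k p (M : 'M[C]_(k, p)) x : reV ((- M) *m x) = - reV (M *m x).
Proof. by apply/matrixP => i j; rewrite mulNmx !mxE ReN. Qed.

Lemma vleNN k (x y : 'cV[R]_k) : vle (- x) (- y) <-> vle y x.
Proof. by split => h i; have := h i; rewrite !mxE lerN2. Qed.
Lemma vltNN k (x y : 'cV[R]_k) : vlt (- x) (- y) <-> vlt y x.
Proof. by split => h i; have := h i; rewrite !mxE ltrN2. Qed.

Lemma mS1 (m q : nat) (a : R) (D : 'M[C]_(q, m)) d v :
  S1 a (- D) (- d) v <-> S2 a D d v.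
Proof.
by split=> [[h1 h2 h3 h4]|[h1 h2 h3 h4]]; split => //; move: h4; rewrite reV_neg vleNN.
Qed.

Lemma mS2 (n l : nat) (a : R) (B : 'M[C]_(l, n)) b u :
  S2 a (- B) (- b) u <-> S1 a B b u.
Proof.
by split=> [[h1 h2 h3 h4]|[h1 h2 h3 h4]]; split => //; move: h4; rewrite reV_neg vleNN.
Qed.

Lemma mS1strict (m q : nat) (a : R) (D : 'M[C]_(q, m)) d v :
  S2strict a D d v -> S1strict a (- D) (- d) v.
Proof. by case=> h1 h2 h3 h4; split => //; rewrite reV_neg vltNN. Qed.

Lemma adjmxN k p (M : 'M[C]_(k, p)) : adjmx (- M) = - adjmx M.
Proof. by apply/matrixP => i j; rewrite /adjmx !mxE /cconj rmorphN. Qed.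

Lemma mbil (n m : nat) (A : 'M[C]_(n, m)) u v :
  bil v (- adjmx A) u = - bil u A v.
Proof. by rewrite !bilE mulNmx ipNr ip_adj ipC. Qed.

Lemma rdotNr k (x y : 'cV[R]_k) : rdot x (- y) = - rdot x y.
Proof. by rewrite /rdot -sumrN; apply: eq_bigr => i _; rewrite mxE mulrN. Qed.

Lemma mobj (m q : nat) (a : R) (d : 'cV[R]_q) lam (beta : 'cV[C]_m) rho :
  objP a (- d) lam beta rho = - objD a d lam beta rho.
Proof. by rewrite /objP /objD rdotNr; ring. Qed.

Lemma mfeas (n m l q : nat) (A : 'M[C]_(n, m)) a1 (B : 'M[C]_(l, n)) b
  (D : 'M[C]_(q, m)) u lam beta rho r :
  feasP (- adjmx A) a1 (- D) (- B) (- b) u lam beta rho r <->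
  feasD A a1 B b D u lam beta rho r.
Proof.
have E : (- adjmx A) *m u - adjmx (- D) *m cvC lam - beta + cvC r - cconj rho *: const_mx 1
   = - (adjmx A *m u - adjmx D *m cvC lam + beta - cvC r + cconj rho *: const_mx 1).
  by rewrite adjmxN !mulNmx !opprD !opprK.
split=> [[h1 h2 h3 h4 h5]|[h1 h2 h3 h4 h5]]; split => //.
- by apply: oppr_inj; rewrite -E h1 oppr0.
- by move: h2; rewrite reV_neg vleNN.
- by rewrite E h1 oppr0.
- by rewrite reV_neg vleNN.
Qed.

Lemma mopt (n m l q : nat) (A : 'M[C]_(n, m)) a1 a2 (B : 'M[C]_(l, n)) b
  (D : 'M[C]_(q, m)) d u lam beta rho r :
  optP (- adjmx A) a2 a1 (- D) (- d) (- B) (- b) u lam beta rho r <->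
  optD A a1 a2 B b D d u lam beta rho r.
Proof.
rewrite /optP /optD.
split=> [[h1 h2]|[h1 h2]]; split.
- exact: (proj1 (mfeas A a1 B b D u lam beta rho r) h1).
- move=> u' l' b' r' r2' f.
  have f' := proj2 (mfeas A a1 B b D u' l' b' r' r2') f.
  have := h2 _ _ _ _ _ f'.
  rewrite !mobj.
  rewrite lerN2.
  by [].
- exact: (proj2 (mfeas A a1 B b D u lam beta rho r) h1).
- move=> u' l' b' r' r2' f.
  have f' := proj1 (mfeas A a1 B b D u' l' b' r' r2') f.
  rewrite !mobj lerN2; exact: h2 f'.
Qed.
Lemma feasP_S2 (n m l q : nat) (A : 'M[C]_(n, m)) a2 (B : 'M[C]_(l, n))
  (D : 'M[C]_(q, m)) d v lam beta rho r :
  feasP A a2 B D d v lam beta rho r -> S2 a2 D d v.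
Proof. by case=> _ h2 h3 h4 [h5 _ _]; split. Qed.

Lemma feasD_S1 (n m l q : nat) (A : 'M[C]_(n, m)) a1 (B : 'M[C]_(l, n)) b
  (D : 'M[C]_(q, m)) u lam beta rho r :
  feasD A a1 B b D u lam beta rho r -> S1 a1 B b u.
Proof. by case=> _ h2 h3 h4 [h5 _ _]; split. Qed.

Lemma WDD (n m l q : nat) (A : 'M[C]_(n, m)) a1 a2 (B : 'M[C]_(l, n)) b
  (D : 'M[C]_(q, m)) d u lam beta rho r v :
  feasD A a1 B b D u lam beta rho r -> S2 a2 D d v ->
  objD a2 d lam beta rho <= bil u A v.
Proof.
move=> f s.
have f' := proj2 (mfeas A a1 B b D u lam beta rho r) f.
have s' := proj2 (mS1 a2 D d v) s.
have := WDP (alpha1 := a2) (d := - b) f' s'.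
rewrite mbil mobj lerN2.
by [].
Qed.
End Mirror.

Theorem theorem5 (R : realType) (n m l q : nat)
  (A : 'M[R[i]]_(n, m)) (alpha1 alpha2 : R)
  (B : 'M[R[i]]_(l, n)) (b : 'cV[R]_l) (D : 'M[R[i]]_(q, m)) (d : 'cV[R]_q) :
  (Num.sqrt (n%:R))^-1 <= alpha1 ->
  (Num.sqrt (m%:R))^-1 <= alpha2 ->
  (exists u, S1strict alpha1 B b u) ->
  (exists v, S2strict alpha2 D d v) ->
  forall (us : 'cV[R[i]]_n) (vs : 'cV[R[i]]_m),
    saddle A alpha1 alpha2 B b D d us vs <->
    exists (rho1 : R[i]) (r1 : 'cV[R]_n) (lam1 : 'cV[R]_l) (beta1 : 'cV[R[i]]_n)
           (rho2 : R[i]) (r2 : 'cV[R]_m) (lam2 : 'cV[R]_q) (beta2 : 'cV[R[i]]_m),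
      optP A alpha1 alpha2 B b D d vs lam1 beta1 rho1 r1 /\
      optD A alpha1 alpha2 B b D d us lam2 beta2 rho2 r2.
Proof.
move=> _ _ [u0 Hu0] [v0 Hv0] us vs.
have al1 : 0 <= alpha1.
  by case: Hu0 => h _ _ _; apply: ltW; apply: le_lt_trans h; exact: cvnorm_ge0.
have Hv0' : S1strict alpha2 (- D) (- d) v0 := mS1strict Hv0.
split.
- case=> S1us S2vs Hu Hv.
  have [lam1 [beta1 [rho1 [r1 [f1 o1]]]]] :=
    @K1_main R n m l q A alpha1 alpha2 B b D d vs (bil us A vs) u0 Hu0 S2vs Hu.
  have H3 : forall u, S1 alpha2 (- D) (- d) u ->
      bil u (- adjmx A) us <= - bil us A vs.
    move=> u su; have su' := proj1 (mS1 alpha2 D d u) su.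
    by rewrite mbil lerN2; exact: Hv.
  have S2us : S2 alpha1 (- B) (- b) us := proj2 (mS2 alpha1 B b us) S1us.
  have [lam2 [beta2 [rho2 [r2 [f2 o2]]]]] :=
    @K1_main R m n q l (- adjmx A) alpha2 alpha1 (- D) (- d) (- B) (- b) us
       (- bil us A vs) v0 Hv0' S2us H3.
  exists rho1, r1, lam1, beta1, rho2, r2, lam2, beta2; split.
    split => // v' l' b' r' r2' f'.
    apply: le_trans o1 _; apply: le_trans (Hv _ (feasP_S2 f')) _.
    exact: WDP f' S1us.
  apply/(mopt A alpha1 alpha2 B b D d us lam2 beta2 rho2 r2); split => // u' l' b' r' r2' f'.
  apply: le_trans o2 _; rewrite lerNl.
  have fD := proj1 (mfeas A alpha1 B b D u' l' b' r' r2') f'.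
  have h1 := WDD (a2 := alpha2) (d := d) fD S2vs.
  have h2 := Hu _ (feasD_S1 fD).
  rewrite (mobj alpha2 d l' b' r') opprK.
  exact: le_trans h1 h2.
- case=> [rho1 [r1 [lam1 [beta1 [rho2 [r2 [lam2 [beta2 [oP oD]]]]]]]]].
  have S2vs := feasP_S2 (proj1 oP).
  have S1us := feasD_S1 (proj1 oD).
  have [y [S1y Hy]] := M_main oP al1.
  have H3 : forall u, S1 alpha2 (- D) (- d) u ->
      bil u (- adjmx A) y <= - objP alpha1 b lam1 beta1 rho1.
    move=> u su; have su' := proj1 (mS1 alpha2 D d u) su.
    by rewrite mbil lerN2; exact: Hy.
  have S2y : S2 alpha1 (- B) (- b) y := proj2 (mS2 alpha1 B b y) S1y.
  have [lam3 [beta3 [rho3 [r3 [f3 o3]]]]] :=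
    @K1_main R m n q l (- adjmx A) alpha2 alpha1 (- D) (- d) (- B) (- b) y
       (- objP alpha1 b lam1 beta1 rho1) v0 Hv0' S2y H3.
  have fD3 := proj1 (mfeas A alpha1 B b D y lam3 beta3 rho3 r3) f3.
  have pd : objP alpha1 b lam1 beta1 rho1 <= objD alpha2 d lam2 beta2 rho2.
    have h := (proj2 oD) _ _ _ _ _ fD3.
    move: o3; rewrite (mobj alpha2 d lam3 beta3 rho3) lerNl opprK => o3.
    exact: le_trans o3 h.
  split => //.
  + move=> u Su.
    have h1 := WDP (proj1 oP) Su.
    have h2 := WDD (a2 := alpha2) (d := d) (proj1 oD) S2vs.
    exact: le_trans h1 (le_trans pd h2).
  + move=> v Sv.
    have h1 := WDP (proj1 oP) S1us.
    have h2 := WDD (a2 := alpha2) (d := d) (proj1 oD) Sv.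
    exact: le_trans h1 (le_trans pd h2).
Qed.
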